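(* For an algebra $\mathbf{A}$ the following are equivalent: (1) for all compatible reflexive relations $R,S,T$ of $\mathbf{A}$, $R\wedge(S\circ T)\subseteq(R\wedge S)\circ T$; (2) for all compatible reflexive relations $R,S,T$ of $\mathbf{A}$, $R\wedge(S\circ T)\subseteq(R\wedge S)\circ(R\wedge T)$.
   Context: $\wedge$ is intersection and $\circ$ is relational composition. A compatible reflexive relation of $\mathbf{A}$ is a reflexive subuniverse of $\mathbf{A}^2$. *)

(* Defs.v *)
From mathcomp Require Import all_boot.
Set Implicit Arguments. Unset Strict Implicit. Unset Printing Implicit Defensive.

Record algebra := Algebra {
  carrier : Type;
  op_sym : Type;
  arity : op_sym -> nat;
  op : forall f : op_sym, ('I_(arity f) -> carrier) -> carrier
}.

Definition rel_on (A : algebra) := carrier A -> carrier A -> Prop.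

Definition compatible (A : algebra) (R : rel_on A) : Prop :=
  forall (f : op_sym A) (a b : 'I_(arity f) -> carrier A),
    (forall k, R (a k) (b k)) -> R (op a) (op b).

Definition reflexive_rel (A : algebra) (R : rel_on A) : Prop :=
  forall x, R x x.

Definition comp_refl_rel (A : algebra) (R : rel_on A) : Prop :=
  reflexive_rel R /\ compatible R.

Definition rel_meet (A : algebra) (R S : rel_on A) : rel_on A :=
  fun x y => R x y /\ S x y.

Definition rel_comp (A : algebra) (S T : rel_on A) : rel_on A :=
  fun x y => exists z, S x z /\ T z y.

Definition rel_sub (A : algebra) (R S : rel_on A) : Prop :=
  forall x y, R x y -> S x y.

(* Main.v *)
Require Import Defs.
From mathcomp Require Import all_boot.

Definition cnv {A : algebra} (R : rel_on A) : rel_on A := fun x y => R y x.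

Lemma cnv_crr {A : algebra} {R : rel_on A} : comp_refl_rel R -> comp_refl_rel (cnv R).
Proof. move=> [Hr Hc]; split; first by move=> x; apply: Hr.
by move=> f a b H; apply: Hc. Qed.

Lemma meet_crr {A : algebra} {R S : rel_on A} :
  comp_refl_rel R -> comp_refl_rel S -> comp_refl_rel (rel_meet R S).
Proof. move=> [Hr Hc] [Sr Sc]; split; first by move=> x; split.
move=> f a b H; split; [apply: Hc | apply: Sc] => k; case: (H k). by []. by []. Qed.

Theorem theorem5p3 (A : algebra) :
  (forall R S T : rel_on A,
      comp_refl_rel R -> comp_refl_rel S -> comp_refl_rel T ->
      rel_sub (rel_meet R (rel_comp S T)) (rel_comp (rel_meet R S) T))
  <->
  (forall R S T : rel_on A,
      comp_refl_rel R -> comp_refl_rel S -> comp_refl_rel T ->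
      rel_sub (rel_meet R (rel_comp S T))
              (rel_comp (rel_meet R S) (rel_meet R T))).
Proof.
split.
- move=> H R S T HR HS HT x y Hxy.
  have [z [[xRz xSz] zTy]] := H R S T HR HS HT x y Hxy.
  have H2 := H (cnv R) (cnv T) (cnv (rel_meet R S)) (cnv_crr HR) (cnv_crr HT)
     (cnv_crr (meet_crr HR HS)) y x.
  case: H2.
    split; first by case: Hxy.
    by exists z; split => //; split.
  move=> w [[wRy wTy] [xRw xSw]].
  by exists w; split; split.
- move=> H R S T HR HS HT x y Hxy.
  have [z [Hxz [_ zTy]]] := H R S T HR HS HT x y Hxy.
  by exists z.
Qed.
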